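(* Let $G\in\mathbb{R}^{n\times n}$ be symmetric positive semidefinite. Let $S$ be a random matrix with a finite discrete distribution, $S=S_i\in\mathbb{R}^{n\times q_i}$ with probability $p_i>0$ for $i=1,\dots,r$, and let $\mathbb{S}\eqdef[S_1,\dots,S_r]\in\mathbb{R}^{n\times\sum_i q_i}$. If $$p_i=\frac{\mathrm{Tr}(S_i^\top G^2 S_i)}{\mathrm{Tr}(\mathbb{S}^\top G^2\mathbb{S})},\qquad i=1,\dots,r,$$ then $$\lambda_{\min}^+\Big(G\,\mathbb{E}\big[S(S^\top G^2 S)^\dagger S^\top\big]\,G\Big)\ \ge\ \frac{\lambda_{\min}^+(\mathbb{S}^\top G^2\mathbb{S})}{\mathrm{Tr}(\mathbb{S}^\top G^2\mathbb{S})}.$$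
   Context: $M^\dagger$ is the Moore–Penrose pseudoinverse; $\lambda_{\min}^+(M)$ is the smallest nonzero eigenvalue of a symmetric positive semidefinite matrix $M$. *)

(* Defs.v *)
From HB Require Import structures.
From mathcomp Require Import all_boot all_order all_algebra.
From mathcomp Require Import all_classical all_reals.
Set Implicit Arguments. Unset Strict Implicit. Unset Printing Implicit Defensive.
Import Order.TTheory GRing.Theory Num.Theory.
Local Open Scope ring_scope.
Local Open Scope classical_set_scope.

Definition penrose (R : realType) (m k : nat) (A : 'M[R]_(m, k)) (X : 'M[R]_(k, m)) : Prop :=
  [/\ A *m X *m A = A, X *m A *m X = X, (A *m X)^T = A *m X & (X *m A)^T = X *m A].

Definition mp_pinv (R : realType) (m k : nat) (A : 'M[R]_(m, k)) : 'M[R]_(k, m) :=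
  xget 0 [set X | penrose A X].

Definition psd (R : realType) (n : nat) (M : 'M[R]_n) : Prop :=
  M^T = M /\ forall v : 'rV[R]_n, 0 <= (v *m M *m v^T) 0 0.

(* smallest nonzero eigenvalue (for symmetric PSD matrices, the eigenvalues are real) *)
Definition lambda_min_pos (R : realType) (n : nat) (M : 'M[R]_n) : R :=
  inf [set a : R | eigenvalue M a /\ a != 0].

(* Main.v *)
Require Import Defs.
From HB Require Import structures.
From mathcomp Require Import all_boot all_order all_algebra.
From mathcomp Require Import all_classical all_reals.
From mathcomp Require Import complex spectral.
From mathcomp Require Import ring lra.
Import Order.TTheory GRing.Theory Num.Theory.
Local Open Scope ring_scope.
Set Implicit Arguments. Unset Strict Implicit. Unset Printing Implicit Defensive.

Lemma sqE (R : realType) k (v : 'rV[R]_k) : (v *m v^T) 0 0 = \sum_j v 0 j ^+ 2.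
Proof. by rewrite !mxE; apply: eq_bigr => j _; rewrite !mxE expr2. Qed.

Lemma sq_ge0 (R : realType) k (v : 'rV[R]_k) : 0 <= (v *m v^T) 0 0.
Proof. by rewrite sqE; apply: sumr_ge0 => j _; apply: sqr_ge0. Qed.

Lemma sum_sq_eq0 (R : realType) k (f : 'I_k -> R) : \sum_j f j ^+ 2 = 0 -> forall j, f j = 0.
Proof.
move=> /eqP; rewrite psumr_eq0 => [/allP H j|j _]; last exact: sqr_ge0.
by apply/eqP; rewrite -sqrf_eq0; apply: (implyP (H j (mem_index_enum _))).
Qed.

Lemma sq_eq0 (R : realType) k (v : 'rV[R]_k) : (v *m v^T) 0 0 = 0 -> v = 0.
Proof.
rewrite sqE => /sum_sq_eq0 H; apply/rowP => j; rewrite mxE; exact: H.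
Qed.

Lemma mmT_eq0 (R : realType) a b (X : 'M[R]_(a, b)) : X *m X^T = 0 -> X = 0.
Proof.
move=> H; apply/matrixP => i j; rewrite mxE.
have : (X *m X^T) i i = 0 by rewrite H mxE.
rewrite mxE (eq_bigr (fun k => X i k ^+ 2)) => [/sum_sq_eq0 //|k _].
by rewrite mxE expr2.
Qed.

Lemma CS (R : realType) k (a b : 'I_k -> R) :
  (\sum_j a j * b j) ^+ 2 <= (\sum_j a j ^+ 2) * (\sum_j b j ^+ 2).
Proof.
set s := \sum_j b j ^+ 2; set c := \sum_j a j * b j; set t := \sum_j a j ^+ 2.
have s0 : 0 <= s by apply: sumr_ge0 => j _; apply: sqr_ge0.
have h : 0 <= \sum_j (s * a j - c * b j) ^+ 2 by apply: sumr_ge0 => j _; apply: sqr_ge0.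
have e : \sum_j (s * a j - c * b j) ^+ 2 = s * (s * t - c ^+ 2).
  rewrite (eq_bigr (fun j => (s ^+ 2 * a j ^+ 2 + c ^+ 2 * b j ^+ 2) - (2 * s * c) * (a j * b j))); last by move=> j _; ring.
  rewrite sumrB big_split /= -!mulr_sumr -/s -/c -/t; ring.
have [s_eq0|s_ne0] := eqVneq s 0.
  have bz := @sum_sq_eq0 _ _ b s_eq0.
  have -> : c = 0 by rewrite /c big1 // => j _; rewrite bz mulr0.
  by rewrite expr0n /= mulr_ge0 // sumr_ge0 // => j _; apply: sqr_ge0.
have sp : 0 < s by rewrite lt_def s_ne0 s0.
rewrite e pmulr_rge0 // subr_ge0 in h.
by rewrite mulrC.
Qed.

Lemma CSmx (R : realType) n q (u : 'rV[R]_n) (A : 'M[R]_(n, q)) :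
  ((u *m A) *m (u *m A)^T) 0 0 <= \tr (A^T *m A) * (u *m u^T) 0 0.
Proof.
rewrite sqE sqE /mxtrace mulr_suml; apply: ler_sum => j _.
have -> : (u *m A) 0 j = \sum_k u 0 k * A k j by rewrite mxE.
have -> : (A^T *m A) j j = \sum_k A k j ^+ 2.
  by rewrite mxE; apply: eq_bigr => k _; rewrite mxE expr2.
by rewrite mulrC; apply: CS.
Qed.

Lemma gram_unit (R : realType) p s (H : 'M[R]_(p, s)) : row_free H -> H *m H^T \in unitmx.
Proof.
move=> fH; rewrite -row_free_unit -kermx_eq0; set K := kermx _.
have hK : K *m (H *m H^T) = 0 := mulmx_ker _.
have : (K *m H) *m (K *m H)^T = 0 by rewrite trmx_mul mulmxA -(mulmxA K) hK mul0mx.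
by move/mmT_eq0/eqP; rewrite mulmx_free_eq0.
Qed.

Lemma penrose_fact (R : realType) m r k (F : 'M[R]_(m, r)) (H : 'M[R]_(r, k)) :
  row_free F^T -> row_free H ->
  penrose (F *m H) (H^T *m invmx (H *m H^T) *m invmx (F^T *m F) *m F^T).
Proof.
move=> fF fH.
have uH := gram_unit fH; have uF := gram_unit fF; rewrite trmxK in uF.
set U := invmx (H *m H^T); set V := invmx (F^T *m F).
have UT : U^T = U by rewrite /U trmx_inv trmx_mul trmxK.
have VT : V^T = V by rewrite /V trmx_inv trmx_mul trmxK.
have eU : H *m H^T *m U = 1%:M by apply: mulmxV.
have eV : V *m (F^T *m F) = 1%:M by apply: mulVmx.
have eU' : U *m (H *m H^T) = 1%:M by apply: mulVmx.
set X := H^T *m U *m V *m F^T.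
have AX : F *m H *m X = F *m V *m F^T.
  by rewrite /X !mulmxA -(mulmxA F H) -(mulmxA F) eU mulmx1.
have XA : X *m (F *m H) = H^T *m U *m H.
  by rewrite /X -!mulmxA (mulmxA F^T) (mulmxA V) eV mul1mx.
split.
- by rewrite AX -!mulmxA (mulmxA F^T) (mulmxA V) eV mul1mx.
- by rewrite XA /X !mulmxA -(mulmxA (H^T *m U) H H^T) -(mulmxA H^T U) eU' mulmx1.
- by rewrite AX !trmx_mul trmxK VT mulmxA.
- by rewrite XA !trmx_mul trmxK UT mulmxA.
Qed.

Lemma penrose_ex (R : realType) m k (A : 'M[R]_(m, k)) : exists X, penrose A X.
Proof.
have fH : row_free (row_base A) := row_base_free A.
have fF : row_free (col_base A)^T by rewrite /row_free mxrank_tr; apply: col_base_full.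
by have := penrose_fact fF fH; rewrite mulmx_base; eexists; eauto.
Qed.

Lemma mp_penrose (R : realType) m k (A : 'M[R]_(m, k)) : penrose A (mp_pinv A).
Proof. by rewrite /mp_pinv; apply: xgetPex; apply: penrose_ex. Qed.

Local Open Scope complex_scope.

Lemma real_C (R : realType) (x : R[i]) : x \is Num.real -> x = (complex.Re x)%:C.
Proof.
case: x => a b /CrealP /= [] hb; congr Complex; lra.
Qed.

Lemma real_spec (R : realType) n (N : 'M[R]_n) : N^T = N ->
  exists (Q : 'M[R[i]]_n) (d : 'rV[R]_n),
   [/\ (Q ^t*)%sesqui *m Q = 1%:M, map_mx (real_complex R) N = Q *m diag_mx (map_mx (real_complex R) d) *m (Q ^t*)%sesqui
     & forall j, eigenvalue N (d 0 j)].
Proof.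
move=> NT; set Nc := map_mx (real_complex R) N.
have sym : Nc \is symmetricmx.
  by apply/is_hermitianmxP; rewrite expr0 scale1r map_mx_id // /Nc map_trmx NT.
have real : Nc \is a realmx.
  apply/mxOverP => i j; rewrite mxE; apply/CrealP; exact: conjc_real.
have /orthomx_spectralP E := hermitian_normalmx (realsym_hermsym sym real).
have U := spectral_unitarymx Nc.
have Pu := spectral_unit Nc.
set P := spectralmx Nc in E U Pu; set sp := spectral_diag Nc in E.
have spr := hermitian_spectral_diag_real (realsym_hermsym sym real).
exists (P ^t*)%sesqui, (\row_j complex.Re (sp 0 j)).
have dsp : map_mx (real_complex R) (\row_j complex.Re (sp 0 j)) = sp.
  apply/rowP => j; rewrite !mxE /=; symmetry; apply: real_C.
  by move/mxOverP: spr => /(_ 0 j).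
rewrite dsp trmxCK; split.
- by apply/unitarymxP.
- by rewrite E invmx_unitary.
move=> j; rewrite mxE -(eigenvalue_map (real_complex R)).
have ev : eigenvalue Nc (sp 0 j).
  apply/eigenvalueP; exists (row j P).
    rewrite -row_mul E !mulmxA mulmxV // mul1mx row_mul row_diag_mx -scalemxAl.
    by rewrite rowE.
  apply/eqP => h; have : row j P *m invmx P = 0 by rewrite h mul0mx.
  rewrite -row_mul mulmxV // row1 => /rowP /(_ j); rewrite !mxE !eqxx /=.
  by move/eqP; rewrite oner_eq0.
move: ev; congr (is_true (eigenvalue _ _)).
by apply: real_C; move/mxOverP: spr => /(_ 0 j).
Qed.

Lemma quad_form (R : realType) n (Q : 'M[R[i]]_n) (e : 'rV[R]_n) (Y : 'M[R]_n) (w : 'rV[R]_n) :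
  map_mx (real_complex R) Y = Q *m diag_mx (map_mx (real_complex R) e) *m (Q ^t*)%sesqui ->
  ((w *m Y *m w^T) 0 0)%:C =
  \sum_j (e 0 j)%:C * ((map_mx (real_complex R) w *m Q) 0 j * ((map_mx (real_complex R) w *m Q) 0 j)^*).
Proof.
move=> EY.
set wc := map_mx (real_complex R) w.
have -> : ((w *m Y *m w^T) 0 0)%:C = (wc *m map_mx (real_complex R) Y *m wc^T) 0 0.
  by rewrite /wc map_trmx -!map_mxM [RHS]mxE.
have wcT : wc^T = map_mx Num.conj (wc^T).
  by apply/matrixP => i j; rewrite !mxE; symmetry; exact: conjc_real.
rewrite EY wcT !mulmxA -(mulmxA _ (Q ^t*)%sesqui) -map_mxM -trmx_mul.
set z := wc *m Q.
rewrite mxE; apply: eq_bigr => j _.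
rewrite !mxE (bigD1 j) //= big1 ?addr0; last first.
  by move=> k kj; rewrite !mxE (negbTE kj) mulr0n mulr0.
rewrite !mxE eqxx mulr1n; ring.
Qed.

Lemma sq_gt0 (R : realType) k (v : 'rV[R]_k) : v != 0 -> 0 < (v *m v^T) 0 0.
Proof. by move=> v0; rewrite lt_def sq_ge0 andbT; apply: contra v0 => /eqP/sq_eq0 ->. Qed.

Lemma eig_quad (R : realType) n (N : 'M[R]_n) a (v : 'rV[R]_n) :
  v *m N = a *: v -> (v *m N *m v^T) 0 0 = a * (v *m v^T) 0 0.
Proof. by move=> h; rewrite h -scalemxAl mxE. Qed.

Lemma eig_ge0 (R : realType) n (N : 'M[R]_n) a :
  (forall v : 'rV[R]_n, 0 <= (v *m N *m v^T) 0 0) -> eigenvalue N a -> 0 <= a.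
Proof.
move=> ps /eigenvalueP [v hv v0]; have := ps v; rewrite (eig_quad hv).
by rewrite pmulr_lge0 // sq_gt0.
Qed.

Lemma N2 (R : realType) n (N : 'M[R]_n) : N^T = N -> (forall v : 'rV[R]_n, 0 <= (v *m N *m v^T) 0 0) ->
  forall w : 'rV[R]_n, lambda_min_pos N * (w *m N *m w^T) 0 0 <= (w *m (N *m N) *m w^T) 0 0.
Proof.
move=> NT ps w; have [Q [d [QQ EN ev]]] := real_spec NT.
have ENN : map_mx (real_complex R) (N *m N) =
    Q *m diag_mx (map_mx (real_complex R) (\row_j (d 0 j * d 0 j))) *m (Q ^t*)%sesqui.
  rewrite map_mxM EN !mulmxA -(mulmxA _ (Q ^t*)%sesqui) QQ mulmx1 -(mulmxA Q) mulmx_diag.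
  by congr (_ *m diag_mx _ *m _); apply/rowP => j; rewrite !mxE rmorphM.
rewrite -lecR rmorphM /= (quad_form w EN) (quad_form w ENN) mulr_sumr.
apply: ler_sum => j _; rewrite (mulrA (lambda_min_pos N)%:C) -rmorphM.
have -> : (\row_j0 (d 0 j0 * d 0 j0)) 0 j = d 0 j * d 0 j by rewrite mxE.
apply: ler_wpM2r; first exact: mul_conjC_ge0.
rewrite lecR.
have dj0 : 0 <= d 0 j := eig_ge0 ps (ev j).
have [->|dnz] := eqVneq (d 0 j) 0; first by rewrite !mulr0.
apply: ler_wpM2r => //.
have hl : has_lbound [set a : R | eigenvalue N a /\ a != 0].
  by exists 0 => a [ea _]; apply: eig_ge0 ps ea.
by apply: (ge_inf hl); split.
Qed.

Lemma eig_nz (R : realType) n (N : 'M[R]_n) : N^T = N -> N != 0 ->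
  exists a, eigenvalue N a /\ a != 0.
Proof.
move=> NT Nn0; have [Q [d [QQ EN ev]]] := real_spec NT.
have [j dj|] := pickP (fun j => d 0 j != 0); first by exists (d 0 j).
move=> hd; move: Nn0; rewrite -(map_mx_eq0 (real_complex R)) EN.
have -> : d = 0 by apply/rowP => j; rewrite mxE; move/negbFE/eqP: (hd j).
by rewrite map_mx0 linear0 mulmx0 mul0mx eqxx.
Qed.

Lemma aux_AXK (R : realType) n q (A : 'M[R]_(n, q)) (K X : 'M[R]_q) :
  A^T *m A = K -> K *m X *m K = K -> A *m X *m K = A.
Proof.
move=> hK h1.
have KT : K^T = K by rewrite -hK trmx_mul trmxK.
set E := A *m X *m K - A.
have ET : E^T = K *m X^T *m A^T - A^T by rewrite /E linearB /= !trmx_mul KT !mulmxA.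
have W : E^T *m A = (K *m X^T - 1%:M) *m K.
  by rewrite ET mulmxBl mulmxBl mul1mx -!mulmxA hK.
have h1' : K *m (X *m K) = K by rewrite mulmxA.
have : E^T *m E^T^T = 0.
  rewrite trmxK {2}/E mulmxBr (mulmxA E^T (A *m X) K) (mulmxA E^T A X) W.
  by rewrite -!mulmxA h1' subrr.
by move/mmT_eq0 => /eqP; rewrite trmx_eq0 subr_eq0 => /eqP.
Qed.

Lemma proj_facts (R : realType) n q (A : 'M[R]_(n, q)) X : penrose (A^T *m A) X ->
  [/\ (A *m X *m A^T)^T = A *m X *m A^T, A *m X *m A^T *m A = A
    & (A *m X *m A^T) *m (A *m X *m A^T) = A *m X *m A^T].
Proof.
move=> [h1 h2 _ _].
have e1 : A *m X *m (A^T *m A) = A by apply: aux_AXK.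
have AT : A^T = A^T *m A *m X^T *m A^T.
  by rewrite -{1}e1 !trmx_mul trmxK !mulmxA.
split.
- by rewrite !trmx_mul trmxK !mulmxA {2}AT !mulmxA -(mulmxA (A *m X) A^T A) e1.
- by rewrite -mulmxA e1.
- by rewrite !mulmxA -(mulmxA (A *m X)) e1.
Qed.

Lemma proj_bound (R : realType) n q (A : 'M[R]_(n, q)) X (x : 'rV[R]_n) :
  penrose (A^T *m A) X ->
  ((x *m A) *m (x *m A)^T) 0 0 <= \tr (A^T *m A) * (x *m (A *m X *m A^T) *m x^T) 0 0.
Proof.
move=> /proj_facts; move: (A *m X *m A^T) => P [PT PA PP].
have -> : (x *m P *m x^T) = (x *m P) *m (x *m P)^T.
  by rewrite trmx_mul PT !mulmxA -(mulmxA x P P) PP.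
have -> : x *m A = (x *m P) *m A by rewrite -mulmxA PA.
exact: CSmx.
Qed.

Lemma tr_gram_ge0 (R : realType) n q (A : 'M[R]_(n, q)) : 0 <= \tr (A^T *m A).
Proof.
rewrite /mxtrace; apply: sumr_ge0 => j _; rewrite mxE; apply: sumr_ge0 => k _.
by rewrite mxE -expr2 sqr_ge0.
Qed.

Lemma main_abs (R : realType) n r (q : 'I_r -> nat) (Ai : forall i : 'I_r, 'M[R]_(n, q i))
  (p : 'I_r -> R) :
  (forall i, 0 < p i) -> \sum_i p i = 1 ->
  (forall i, p i = \tr ((Ai i)^T *m Ai i) / \tr ((\mxrow_j Ai j)^T *m \mxrow_j Ai j)) ->
  lambda_min_pos ((\mxrow_j Ai j)^T *m \mxrow_j Ai j) / \tr ((\mxrow_j Ai j)^T *m \mxrow_j Ai j)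
   <= lambda_min_pos (\sum_i p i *: (Ai i *m mp_pinv ((Ai i)^T *m Ai i) *m (Ai i)^T)).
Proof.
move=> ppos psum phyp.
set A := \mxrow_j Ai j in phyp *.
set T := \tr (A^T *m A) in phyp *.
set B := A^T *m A.
have pen i := mp_penrose ((Ai i)^T *m Ai i).
set M := \sum_i p i *: _.
have T0 : 0 <= T := tr_gram_ge0 A.
have Tn0 : T != 0.
  apply/eqP => T_eq0; move: psum.
  rewrite big1 => [/eqP|i _]; first by rewrite eq_sym oner_eq0.
  by rewrite phyp T_eq0 invr0 mulr0.
have Tpos : 0 < T by rewrite lt_def Tn0 T0.
have tp : forall i, T * p i = \tr ((Ai i)^T *m Ai i).
  by move=> i; rewrite phyp mulrC divfK.
have key : forall x : 'rV[R]_n, ((x *m A) *m (x *m A)^T) 0 0 <= T * (x *m M *m x^T) 0 0.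
  move=> x.
  have -> : (x *m A) *m (x *m A)^T = \sum_i (x *m Ai i) *m (x *m Ai i)^T.
    by rewrite /A mul_mxrow tr_mxrow mul_mxrow_mxcol.
  have -> : x *m M *m x^T = \sum_i p i *: (x *m (Ai i *m mp_pinv ((Ai i)^T *m Ai i) *m (Ai i)^T) *m x^T).
    rewrite /M mulmx_sumr mulmx_suml; apply: eq_bigr => i _.
    by rewrite -scalemxAr -scalemxAl.
  rewrite !summxE mulr_sumr; apply: ler_sum => i _; rewrite [X in T * X]mxE mulrA tp.
  exact: proj_bound (pen i).
have MT : M^T = M.
  rewrite /M linear_sum; apply: eq_bigr => i _; rewrite linearZ /=.
  by have [PT _ _] := proj_facts (pen i); rewrite PT.
have Mn0 : M != 0.
  have [i Ai0|hA] := pickP (fun i => row i A != 0); last first.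
    move: Tn0; rewrite /T; suff -> : A = 0 by rewrite trmx0 mulmx0 mxtrace0 eqxx.
    by apply/row_matrixP => i; rewrite row0; move/negbFE/eqP: (hA i).
  have := key (delta_mx 0 i); rewrite -rowE => h.
  apply/eqP => M0; move: h; rewrite M0 mulmx0 mul0mx [X in T * X]mxE mulr0.
  by rewrite leNgt sq_gt0.
have BT : B^T = B by rewrite /B trmx_mul trmxK.
have Bps : forall v : 'rV[R]__, 0 <= (v *m B *m v^T) 0 0.
  move=> v; have -> : v *m B *m v^T = (v *m A^T) *m (v *m A^T)^T.
    by rewrite trmx_mul trmxK /B !mulmxA.
  exact: sq_ge0.
have eigb : forall a, eigenvalue M a -> a != 0 -> lambda_min_pos B / T <= a.
  move=> a /eigenvalueP [x hx x0] a0.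
  set w := a^-1 *: (\mxrow_i (p i *: (x *m Ai i *m mp_pinv ((Ai i)^T *m Ai i)))).
  have xw : x = w *m A^T.
    have -> : x = a^-1 *: (x *m M) by rewrite hx scalerA mulVf // scale1r.
    rewrite /w -scalemxAl; congr (_ *: _).
    rewrite /A tr_mxrow mul_mxrow_mxcol /M mulmx_sumr; apply: eq_bigr => i _.
    by rewrite -scalemxAr -scalemxAl !mulmxA.
  have sqx : (x *m x^T) 0 0 = (w *m B *m w^T) 0 0.
    by rewrite xw trmx_mul trmxK /B !mulmxA.
  have sqxA : ((x *m A) *m (x *m A)^T) 0 0 = (w *m (B *m B) *m w^T) 0 0.
    have xA : x *m A = w *m B by rewrite {1}xw -mulmxA.
    by rewrite xA [(w *m B)^T]trmx_mul BT !mulmxA.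
  have h1 := N2 BT Bps w.
  have h2 := key x; rewrite (eig_quad hx) sqxA in h2.
  have xpos := sq_gt0 x0; rewrite sqx in xpos.
  rewrite ler_pdivrMr //.
  have := le_trans h1 h2; rewrite -sqx mulrA (mulrC T).
  by rewrite sqx ler_pM2r.
apply: lb_le_inf.
  by have [a [ea a0]] := eig_nz MT Mn0; exists a.
by move=> a [ea a0]; apply: eigb.
Qed.


Close Scope complex_scope.
Local Open Scope ring_scope.
Unset Implicit Arguments.

Theorem theorem5 (R : realType) (n r : nat) (G : 'M[R]_n)
  (q : 'I_r -> nat) (S : forall i : 'I_r, 'M[R]_(n, q i)) (p : 'I_r -> R) :
  psd G ->
  (forall i, 0 < p i) ->
  \sum_(i < r) p i = 1 ->
  (forall i, p i = \tr ((S i)^T *m (G *m G) *m S i) /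
                   \tr ((\mxrow_(j < r) S j)^T *m (G *m G) *m (\mxrow_(j < r) S j))) ->
  lambda_min_pos (G *m (\sum_(i < r) p i *: (S i *m mp_pinv ((S i)^T *m (G *m G) *m S i) *m (S i)^T)) *m G)
  >= lambda_min_pos ((\mxrow_(j < r) S j)^T *m (G *m G) *m (\mxrow_(j < r) S j)) /
     \tr ((\mxrow_(j < r) S j)^T *m (G *m G) *m (\mxrow_(j < r) S j)).
Proof.
move=> [GT _] ppos psum phyp.
have gram : forall m (Y : 'M[R]_(n, m)), Y^T *m (G *m G) *m Y = (G *m Y)^T *m (G *m Y).
  by move=> m Y; rewrite trmx_mul GT !mulmxA.
have Mdef : G *m (\sum_i p i *: (S i *m mp_pinv ((S i)^T *m (G *m G) *m S i) *m (S i)^T)) *m G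
   = \sum_i p i *: ((G *m S i) *m mp_pinv ((G *m S i)^T *m (G *m S i)) *m (G *m S i)^T).
  rewrite mulmx_sumr mulmx_suml; apply: eq_bigr => i _.
  rewrite -scalemxAr -scalemxAl gram; congr (_ *: _).
  by rewrite trmx_mul GT !mulmxA.
rewrite Mdef !gram mul_mxrow.
apply: main_abs => // i.
by rewrite phyp !gram mul_mxrow.
Qed.
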